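(* Let $A$ be a real alternative $^*$-algebra (not necessarily of finite dimension). For each $x\in C_A$: (1) $n(x)=n(x^c)$; (2) if $x\neq 0$ then $x$ is invertible and $x^{-1}=n(x)^{-1}x^c$; (3) $(x,x^c,y)=0$ for all $y\in A$; (4) $n(xy)=n(x)n(y)=n(y)n(x)=n(yx)$ for all $y\in C_A$. As a consequence, $C_A$ and $N_A$ are closed under multiplication and $C_A^*:=C_A\setminus\{0\}$, $N_A^*:=N_A\setminus\{0\}$ are multiplicative loops.
   Context: A real alternative $^*$-algebra is a real vector space $A$ with a bilinear product and a unit $1$ (with $\mathbb{R}$ identified with $\mathbb{R}1$) such that the associator $(x,y,z)=(xy)z-x(yz)$ is an alternating function, equipped with a $^*$-involution $x\mapsto x^c$, i.e. a real linear map with $(x^c)^c=x$, $(xy)^c=y^cx^c$ and $r^c=r$ for $r\in\mathbb{R}$. The norm is $n(x)=xx^c$. The nucleus of $A$ is $\{r\in A:(r,x,y)=0\ \forall x,y\in A\}$ and the center is $\{r$ in the nucleus$: rx=xr\ \forall x\in A\}$. The normal cone is $N_A=\{0\}\cup\{x\in A: n(x),n(x^c)\in\mathbb{R}\setminus\{0\}\}$ and the central cone is $C_A=\{0\}\cup\{x\in A: n(x),n(x^c)$ are invertible elements of the center of $A\}$. *)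

(* Defs.v *)
From HB Require Import structures.
From mathcomp Require Import all_boot all_order all_algebra.
From mathcomp Require Import reals.
Set Implicit Arguments. Unset Strict Implicit. Unset Printing Implicit Defensive.
Import Order.TTheory GRing.Theory Num.Theory.
Local Open Scope ring_scope.

Section AltStar.
Variables (R : realType) (V : lmodType R).
Variables (mul : V -> V -> V) (one : V) (c : V -> V).

Definition assoc (x y z : V) : V := mul (mul x y) z - mul x (mul y z).

(* real alternative *-algebra with unit [one], product [mul], involution [c];
   the scalars r are identified with r *: one. *)
Record is_alt_star_alg : Prop := {
  mul_linl : forall (a : R) (x y z : V), mul (a *: x + y) z = a *: mul x z + mul y z;
  mul_linr : forall (a : R) (x y z : V), mul x (a *: y + z) = a *: mul x y + mul x z;
  mul1x : forall x, mul one x = x;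
  mulx1 : forall x, mul x one = x;
  one_neq0 : one != 0;
  assoc_alt12 : forall x y, assoc x x y = 0;
  assoc_alt23 : forall x y, assoc x y y = 0;
  assoc_alt13 : forall x y, assoc x y x = 0;
  c_lin : forall (a : R) (x y : V), c (a *: x + y) = a *: c x + c y;
  c_invol : forall x, c (c x) = x;
  c_antimul : forall x y, c (mul x y) = mul (c y) (c x);
  c_real : forall r : R, c (r *: one) = r *: one
}.

Definition nrm (x : V) : V := mul x (c x).

Definition nucleus (r : V) : Prop := forall x y, assoc r x y = 0.
Definition center (r : V) : Prop := nucleus r /\ forall x, mul r x = mul x r.

Definition center_unit (u : V) : Prop :=
  center u /\ exists v, center v /\ mul u v = one /\ mul v u = one.

Definition real_nz (u : V) : Prop := exists r : R, r != 0 /\ u = r *: one.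

Definition normal_cone (x : V) : Prop :=
  x = 0 \/ (real_nz (nrm x) /\ real_nz (nrm (c x))).
Definition central_cone (x : V) : Prop :=
  x = 0 \/ (center_unit (nrm x) /\ center_unit (nrm (c x))).

Definition invertible (x : V) : Prop := exists y, mul x y = one /\ mul y x = one.

Definition is_loop (S : V -> Prop) : Prop :=
  S one /\
  (forall a b, S a -> S b -> S (mul a b)) /\
  (forall a b, S a -> S b -> exists! x, S x /\ mul a x = b) /\
  (forall a b, S a -> S b -> exists! y, S y /\ mul y a = b).

End AltStar.

(* Main.v *)
Require Import Defs.
From HB Require Import structures.
From mathcomp Require Import all_boot all_order all_algebra.
From mathcomp Require Import reals.
Import Order.TTheory GRing.Theory Num.Theory.
Local Open Scope ring_scope.
Set Implicit Arguments.

Section Proofs.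
Variables (R : realType) (V : lmodType R).
Variables (mul : V -> V -> V) (one : V) (c : V -> V).
Hypothesis HA : is_alt_star_alg mul one c.

Lemma mulDl x y z : mul (x + y) z = mul x z + mul y z.
Proof. by have := mul_linl HA 1 x y z; rewrite !scale1r. Qed.
Lemma mulDr x y z : mul x (y + z) = mul x y + mul x z.
Proof. by have := mul_linr HA 1 x y z; rewrite !scale1r. Qed.
Lemma mul0l z : mul 0 z = 0.
Proof. by apply: (addrI (mul 0 z)); rewrite -mulDl !addr0. Qed.
Lemma mul0r z : mul z 0 = 0.
Proof. by apply: (addrI (mul z 0)); rewrite -mulDr !addr0. Qed.
Lemma mulZl a x z : mul (a *: x) z = a *: mul x z.
Proof. by have := mul_linl HA a x 0 z; rewrite !addr0 mul0l addr0. Qed.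
Lemma mulZr a x z : mul x (a *: z) = a *: mul x z.
Proof. by have := mul_linr HA a x z 0; rewrite !addr0 mul0r addr0. Qed.
Lemma mulNl x z : mul (- x) z = - mul x z.
Proof. by rewrite -scaleN1r mulZl scaleN1r. Qed.
Lemma mulNr x z : mul x (- z) = - mul x z.
Proof. by rewrite -scaleN1r mulZr scaleN1r. Qed.
Lemma mulBl x y z : mul (x - y) z = mul x z - mul y z.
Proof. by rewrite mulDl mulNl. Qed.
Lemma mulBr x y z : mul x (y - z) = mul x y - mul x z.
Proof. by rewrite mulDr mulNr. Qed.

Lemma c0 : c 0 = 0.
Proof. by have := c_lin HA 1 0 0; rewrite !scale1r !addr0 => h; apply: (addrI (c 0)); rewrite -h addr0. Qed.
Lemma cD x y : c (x + y) = c x + c y.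
Proof. by have := c_lin HA 1 x y; rewrite !scale1r. Qed.
Lemma cZ a x : c (a *: x) = a *: c x.
Proof. by have := c_lin HA a x 0; rewrite !addr0 c0 addr0. Qed.
Lemma cN x : c (- x) = - c x.
Proof. by rewrite -scaleN1r cZ scaleN1r. Qed.
Lemma cB x y : c (x - y) = c x - c y.
Proof. by rewrite cD cN. Qed.
Lemma c_one : c one = one.
Proof. by have := c_real HA 1; rewrite !scale1r. Qed.

Notation A := (assoc mul).

Lemma assocDl x y b d : A (x + y) b d = A x b d + A y b d.
Proof. by rewrite /assoc !(mulDl, mulDr) opprD addrACA. Qed.
Lemma assocDm a x y d : A a (x + y) d = A a x d + A a y d.
Proof. by rewrite /assoc !(mulDl, mulDr) opprD addrACA. Qed.
Lemma assocDr a b x y : A a b (x + y) = A a b x + A a b y.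
Proof. by rewrite /assoc !(mulDl, mulDr) opprD addrACA. Qed.
Lemma assoc0l b d : A 0 b d = 0.
Proof. by rewrite /assoc !mul0l subrr. Qed.

Lemma skew12 x y z : A x y z = - A y x z.
Proof.
have := assoc_alt12 HA (x + y) z.
rewrite assocDl !assocDm !(assoc_alt12 HA) add0r addr0.
by move/eqP; rewrite addr_eq0 => /eqP.
Qed.
Lemma skew23 x y z : A x y z = - A x z y.
Proof.
have := assoc_alt23 HA x (y + z).
rewrite assocDm !assocDr !(assoc_alt23 HA) add0r addr0.
by move/eqP; rewrite addr_eq0 => /eqP.
Qed.
Lemma skew13 x y z : A x y z = - A z y x.
Proof.
have := assoc_alt13 HA (x + z) y.
rewrite assocDl !assocDr !(assoc_alt13 HA) add0r addr0.
by move/eqP; rewrite addr_eq0 => /eqP.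
Qed.
Lemma cyc x y z : A x y z = A y z x.
Proof. by rewrite skew12 skew23 opprK. Qed.

Lemma zmodT (P1 P2 P3 P4 P5 : V) :
  P1 - P2 - (P3 - P4) + (P2 - P5) = P4 - P5 + (P1 - P3).
Proof.
apply/eqP; rewrite -subr_eq0 !opprD !opprK !addrA.
rewrite ?(addrAC _ P2) ?(addrAC _ (-P2)) addrK.
rewrite ?(addrAC _ P3) ?(addrAC _ (-P3)) addrK.
rewrite ?(addrAC _ P4) ?(addrAC _ (-P4)) addrK.
rewrite ?(addrAC _ P5) ?(addrAC _ (-P5)) addrK.
by rewrite subrr.
Qed.

Lemma teich p q r s :
  A (mul p q) r s - A p (mul q r) s + A p q (mul r s)
  = mul p (A q r s) + mul (A p q r) s.
Proof. by rewrite /assoc !(mulBl, mulBr) zmodT. Qed.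


Notation Cen := (center mul).

Lemma assoc_eq0 {p q s} : A p q s = 0 -> mul (mul p q) s = mul p (mul q s).
Proof. by move=> h; apply/eqP; rewrite -subr_eq0; apply/eqP. Qed.

Lemma nuc_l r (h : Cen r) a b : A r a b = 0.
Proof. by case: h => h _; apply: h. Qed.
Lemma nuc_m r (h : Cen r) a b : A a r b = 0.
Proof. by rewrite skew12 nuc_l // oppr0. Qed.
Lemma nuc_r r (h : Cen r) a b : A a b r = 0.
Proof. by rewrite cyc cyc nuc_l. Qed.
Lemma cen_comm r (h : Cen r) a : mul r a = mul a r.
Proof. by case: h => _ h; apply: h. Qed.
Lemma cenL r (h : Cen r) a b : mul (mul r a) b = mul r (mul a b).
Proof. by apply: assoc_eq0; apply: nuc_l. Qed.
Lemma cenM r (h : Cen r) a b : mul a (mul r b) = mul r (mul a b).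
Proof.
rewrite -(assoc_eq0 (nuc_m h a b)) -(cen_comm h).
exact: cenL.
Qed.

Lemma cen_one : Cen one.
Proof.
split; last by move=> x; rewrite (mul1x HA) (mulx1 HA).
by move=> x y; rewrite /assoc !(mul1x HA) subrr.
Qed.

Lemma cen0 : Cen 0.
Proof. by split=> [x y|x]; rewrite ?assoc0l // mul0l mul0r. Qed.

Lemma natmul0 (v : V) n : (0 < n)%N -> v *+ n = 0 -> v = 0.
Proof.
move=> n0; rewrite -scaler_nat => /eqP; rewrite scaler_eq0 pnatr_eq0.
by case/orP=> [/eqP n00|/eqP //]; rewrite n00 in n0.
Qed.

Lemma solve3 (X Y : V) : - Y = X + Y -> - X - Y = X -> X = 0 /\ Y = 0.
Proof.
move=> h1 h3.
have eX : X = - Y - Y by apply: (addIr Y); rewrite -h1 subrK.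
rewrite eX opprD !opprK addrK in h3.
have Y0 : Y = 0.
  apply: (@natmul0 _ 3) => //.
  by rewrite !mulrS mulr0n addr0 {1}h3 -opprD addNr.
by rewrite eX Y0 oppr0 addr0.
Qed.

Lemma inv_half a b t : mul a b = one -> mul b a = one ->
  mul a (A a b t) = 0 /\ mul (A a b t) a = 0.
Proof.
move=> hab hba.
have ecyc : A b t a = A a b t by rewrite -cyc.
have ecyc2 : A t a b = A a b t by rewrite cyc.
have h1 := teich a b t a.
rewrite hab (nuc_l cen_one) (assoc_alt13 HA) subrr add0r ecyc in h1.
have h2 := teich t a b a.
rewrite hab hba (nuc_m cen_one) (nuc_r cen_one) (assoc_alt13 HA) mul0r
  subr0 addr0 add0r ecyc2 in h2.
have h4 := teich a b a t.
rewrite hab hba (nuc_l cen_one) (nuc_m cen_one) (assoc_alt13 HA) mul0l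
  subrr add0r addr0 (skew12 b) mulNr in h4.
have h3 := teich a t a b.
rewrite hab (nuc_r cen_one) (assoc_alt13 HA) mul0l addr0 addr0 ecyc2 in h3.
have e1 : A (mul a t) a b = - mul a (A a b t) by rewrite cyc h4.
have e2 : A a (mul t a) b = mul (A a b t) a by rewrite skew23 skew13 h2 opprK.
have e3 : A a b (mul t a) = - mul (A a b t) a by rewrite skew13 h2.
rewrite e1 e2 in h3; rewrite e3 in h1.
move: h1 h3; set X := mul a _; set Y := mul _ a => h1 h3.
exact: solve3.
Qed.

Lemma inv_assoc a b t : mul a b = one -> mul b a = one -> A a b t = 0.
Proof.
move=> hab hba.
have [h1 h2] := inv_half t hab hba.
have [h3 h4] := inv_half t hba hab.
rewrite skew12 mulNr in h3; rewrite skew12 mulNl in h4.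
move/eqP: h3; rewrite oppr_eq0 => /eqP h3.
move/eqP: h4; rewrite oppr_eq0 => /eqP h4.
set X := A a b t in h1 h2 h3 h4 *.
have e1 : A X a b = - X by rewrite /assoc h2 hab mul0l (mulx1 HA) sub0r.
have e2 : A X b a = - X by rewrite /assoc h4 hba mul0l (mulx1 HA) sub0r.
have := skew23 X a b; rewrite e1 e2 opprK => h.
apply: (@natmul0 _ 2) => //.
by rewrite mulr2n -{1}h addNr.
Qed.

Lemma invL a b (hab : mul a b = one) (hba : mul b a = one) t : mul a (mul b t) = t.
Proof. by rewrite -(assoc_eq0 (inv_assoc t hab hba)) hab (mul1x HA). Qed.
Lemma invR a b (hab : mul a b = one) (hba : mul b a = one) t : mul (mul t a) b = t.
Proof.
have := inv_assoc t hab hba; rewrite -cyc => /assoc_eq0 ->.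
by rewrite hab (mulx1 HA).
Qed.

Lemma c_assoc p q s : c (A p q s) = - A (c s) (c q) (c p).
Proof. by rewrite /assoc cB !(c_antimul HA) opprB. Qed.

Lemma cen_c r (h : Cen r) : Cen (c r).
Proof.
split.
  move=> x y; have := c_assoc (c y) (c x) r.
  by rewrite !(c_invol HA) (nuc_r h) c0 => /eqP; rewrite eq_sym oppr_eq0 => /eqP.
move=> x; rewrite -{1}[x](c_invol HA) -(c_antimul HA) -(cen_comm h).
by rewrite (c_antimul HA) (c_invol HA).
Qed.

Lemma cen_mul r s : Cen r -> Cen s -> Cen (mul r s).
Proof.
move=> hr hs; split.
  move=> a b; have := teich r s a b.
  by rewrite !(nuc_l hr) (nuc_l hs) mul0l mul0r subr0 !addr0.
by move=> a; rewrite (cenL hr) (cen_comm hs) (cenM hr).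
Qed.

Notation CU := (center_unit mul one).

Lemma cu_mul r s : CU r -> CU s -> CU (mul r s).
Proof.
move=> [hr [vr [hvr [e1 e2]]]] [hs [vs [hvs [e3 e4]]]].
split; first exact: cen_mul.
exists (mul vs vr); split; first exact: cen_mul.
split.
  by rewrite (cenL hr) -(cenL hs) e3 (mul1x HA) e1.
by rewrite (cenL hvs) -(cenL hvr) e2 (mul1x HA) e4.
Qed.

Lemma cu_c r : CU r -> CU (c r).
Proof.
move=> [hr [vr [hvr [e1 e2]]]]; split; first exact: cen_c.
exists (c vr); split; first exact: cen_c.
by split; rewrite -(c_antimul HA) ?e1 ?e2 c_one.
Qed.

Notation CC := (central_cone mul one c).
Notation NRM := (nrm mul c).

Lemma cu_cc r : CU r -> CC r.
Proof.
move=> h; right; rewrite /nrm (c_invol HA); split; apply: cu_mul => //; exact: cu_c.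
Qed.

Lemma cc_c x : CC x -> CC (c x).
Proof.
case=> [->|[h1 h2]]; first by left; exact: c0.
by right; rewrite (c_invol HA); split.
Qed.

Lemma cc_nrm_eq x : CU (NRM x) -> CU (NRM (c x)) -> NRM x = NRM (c x).
Proof.
move=> [hu _] [hw [w' [hw' [e1 e2]]]].
have ncx : NRM (c x) = mul (c x) x by rewrite /nrm (c_invol HA).
rewrite ncx in hw e1 *.
have k1 : mul (c x) (mul (NRM x) x) = mul (NRM x) (mul (c x) x) by rewrite (cenM hu).
have k2 : mul (NRM x) x = mul x (mul (c x) x).
  exact: (assoc_eq0 (assoc_alt13 HA x (c x))).
have k3 : mul (c x) (mul x (mul (c x) x)) = mul (mul (c x) x) (mul (c x) x).
  by rewrite -(assoc_eq0 (nuc_r hw (c x) x)).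
have e : mul (NRM x) (mul (c x) x) = mul (mul (c x) x) (mul (c x) x).
  by rewrite -k1 k2 k3.
have := congr1 (fun z => mul z w') e.
by rewrite /= (cenL hu) (cenL hw) e1 !(mulx1 HA).
Qed.

Lemma cc_inv x v : CU (NRM x) -> CU (NRM (c x)) -> Cen v ->
  mul (NRM x) v = one -> mul v (NRM x) = one ->
  mul x (mul v (c x)) = one /\ mul (mul v (c x)) x = one.
Proof.
move=> hu hw hv e1 e2; have e := cc_nrm_eq hu hw.
split; first by rewrite (cenM hv); exact: e2.
rewrite (cenL hv); have -> : mul (c x) x = NRM (c x) by rewrite /nrm (c_invol HA).
by rewrite -e.
Qed.

Lemma assoc_cen_m r (h : Cen r) x b t : A x (mul r b) t = mul r (A x b t).
Proof. by rewrite /assoc (cenM h x b) !(cenL h) (cenM h) mulBr. Qed.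

Lemma cc_3 x : CC x -> forall t, A x (c x) t = 0.
Proof.
case=> [->|[hu hw]] t; first by rewrite assoc0l.
case: (hu) => hu0 [v [hv [e1 e2]]].
have [i1 i2] := cc_inv hu hw hv e1 e2.
have k := inv_assoc t i1 i2.
have -> : c x = mul (NRM x) (mul v (c x)) by rewrite -(cenL hu0) e1 (mul1x HA).
by rewrite (assoc_cen_m hu0) k mul0r.
Qed.

Lemma ccP x : CC x -> Cen (NRM x) /\ forall t, A x (c x) t = 0.
Proof.
move=> h; split; last exact: cc_3.
case: h => [->|[[hu _] _]] //; rewrite /nrm c0 mul0r; exact: cen0.
Qed.

Lemma nrm_mul x y : Cen (NRM y) -> (forall t, A y (c y) t = 0) ->
  (forall t, A x (c x) t = 0) -> NRM (mul x y) = mul (NRM y) (NRM x).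
Proof.
rewrite /nrm => hu Py Px.
rewrite (c_antimul HA).
have E : A x y (mul (c y) (c x)) = 0.
  rewrite cyc.
  have := teich y (c y) (c x) x.
  have k : A (c y) (c x) x = 0 by rewrite cyc skew12 Px oppr0.
  rewrite (nuc_l hu) (Py (mul (c x) x)) (Py (c x)) k mul0l mul0r sub0r !addr0.
  by move/eqP; rewrite oppr_eq0 => /eqP.
by rewrite (assoc_eq0 E) -(assoc_eq0 (Py (c x))) (cenM hu).
Qed.

Lemma cc_mul x y : CC x -> CC y -> CC (mul x y).
Proof.
move=> hx hy.
case: (hx) => [->|[ux wx]]; first by left; rewrite mul0l.
case: (hy) => [->|[uy wy]]; first by left; rewrite mul0r.
have [py1 py2] := ccP hy; have [px1 px2] := ccP hx.
have [pcy1 pcy2] := ccP (cc_c hy); have [pcx1 pcx2] := ccP (cc_c hx).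
right; split.
  by rewrite nrm_mul //; exact: cu_mul.
by rewrite (c_antimul HA) nrm_mul //; exact: cu_mul.
Qed.

Lemma loopP (P : V -> Prop) : P one -> one <> 0 ->
  (forall a b, P a -> P b -> P (mul a b)) ->
  (forall a, P a -> a <> 0 -> exists b, (P b /\ b <> 0) /\ mul a b = one /\ mul b a = one) ->
  is_loop mul one (fun x => P x /\ x <> 0).
Proof.
move=> h1 h10 hm hi.
have hm' : forall a b, P a /\ a <> 0 -> P b /\ b <> 0 -> P (mul a b) /\ mul a b <> 0.
  move=> a b [Pa a0] [Pb b0]; split; first exact: hm.
  move=> ab0; have [a' [_ [e1 e2]]] := hi a Pa a0.
  by apply: b0; rewrite -(invL e2 e1 b) ab0 mul0r.
split=> //; split=> //; split.
  move=> a b Sa Sb; have [a' [Sa' [e1 e2]]] := hi a Sa.1 Sa.2.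
  exists (mul a' b); split; first by split; [exact: hm' | exact: invL].
  by move=> x [_ <-]; rewrite (invL e2 e1).
move=> a b Sa Sb; have [a' [Sa' [e1 e2]]] := hi a Sa.1 Sa.2.
exists (mul b a'); split; first by split; [exact: hm' | exact: invR].
by move=> y [_ <-]; rewrite (invR e1 e2).
Qed.


Notation NC := (normal_cone mul one c).

Lemma mulsl k t : mul (k *: one) t = k *: t.
Proof. by rewrite mulZl (mul1x HA). Qed.
Lemma mulsr k t : mul t (k *: one) = k *: t.
Proof. by rewrite mulZr (mulx1 HA). Qed.
Lemma cen_s k : Cen (k *: one).
Proof.
split=> [x y|x]; last by rewrite mulsl mulsr.
by rewrite /assoc !mulsl mulZl subrr.
Qed.

Lemma rz_cu u : real_nz one u -> CU u.
Proof.
case=> k [k0 ->]; split; first exact: cen_s.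
exists (k^-1 *: one); split; first exact: cen_s.
by split; rewrite mulsl scalerA ?mulfV ?mulVf // scale1r.
Qed.

Lemma nc_cc x : NC x -> CC x.
Proof. by case=> [->|[h1 h2]]; [left | right; split; exact: rz_cu]. Qed.

Lemma nc_c x : NC x -> CC x -> NC (c x).
Proof.
case=> [->|[h1 h2]] _; first by left; exact: c0.
by right; rewrite (c_invol HA); split.
Qed.

Lemma rz_mul u w : real_nz one u -> real_nz one w -> real_nz one (mul u w).
Proof.
case=> k [k0 ->] [l [l0 ->]]; exists (k * l); split; first exact: mulf_neq0.
by rewrite mulsl scalerA.
Qed.

Lemma nc_mul x y : NC x -> NC y -> NC (mul x y).
Proof.
move=> hx hy.
case: (hx) => [->|[ux wx]]; first by left; rewrite mul0l.
case: (hy) => [->|[uy wy]]; first by left; rewrite mul0r.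
have hx' := nc_cc hx; have hy' := nc_cc hy.
have [py1 py2] := ccP hy'; have [px1 px2] := ccP hx'.
have [pcy1 pcy2] := ccP (cc_c hy'); have [pcx1 pcx2] := ccP (cc_c hx').
right; split.
  by rewrite nrm_mul //; exact: rz_mul.
by rewrite (c_antimul HA) nrm_mul //; exact: rz_mul.
Qed.

Lemma nc_s k : k != 0 -> NC (k *: one).
Proof.
move=> k0; right; rewrite /nrm !(c_real HA) mulsl scalerA.
by split; exists (k * k); split => //; exact: mulf_neq0.
Qed.

End Proofs.

Theorem theorem1p7 (R : realType) (V : lmodType R)
    (mul : V -> V -> V) (one : V) (c : V -> V)
    (HA : is_alt_star_alg mul one c) :
  (forall x, central_cone mul one c x ->
     (* (1) *)
     nrm mul c x = nrm mul c (c x) /\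
     (* (2) *)
     (x <> 0 ->
        invertible mul one x /\
        forall v, center mul v -> mul (nrm mul c x) v = one -> mul v (nrm mul c x) = one ->
          forall y, mul x y = one -> mul y x = one -> y = mul v (c x)) /\
     (* (3) *)
     (forall y, assoc mul x (c x) y = 0) /\
     (* (4) *)
     (forall y, central_cone mul one c y ->
        nrm mul c (mul x y) = mul (nrm mul c x) (nrm mul c y) /\
        mul (nrm mul c x) (nrm mul c y) = mul (nrm mul c y) (nrm mul c x) /\
        mul (nrm mul c y) (nrm mul c x) = nrm mul c (mul y x))) /\
  (forall x y, central_cone mul one c x -> central_cone mul one c y ->
     central_cone mul one c (mul x y)) /\
  (forall x y, normal_cone mul one c x -> normal_cone mul one c y ->
     normal_cone mul one c (mul x y)) /\
  is_loop mul one (fun x => central_cone mul one c x /\ x <> 0) /\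
  is_loop mul one (fun x => normal_cone mul one c x /\ x <> 0).
Proof.
have one0 : one <> 0 by move/eqP: (one_neq0 HA).
have ccinv : forall a, central_cone mul one c a -> a <> 0 ->
    exists b, (central_cone mul one c b /\ b <> 0) /\ mul a b = one /\ mul b a = one.
  move=> a ha a0; case: (ha) => [/a0 //|[hu hw]].
  case: (hu) => hu0 [v [hv [e1 e2]]].
  have [i1 i2] := cc_inv HA _ hu hw hv e1 e2.
  exists (mul v (c a)); split => //; split.
    apply: cc_mul => //; last exact: cc_c.
    by apply: cu_cc => //; split => //; exists (nrm mul c a).
  move=> b0; rewrite b0 (mul0r HA) in i1; exact: one0 (esym i1).
split.
  move=> x hx.
  have [pu px] := ccP HA hx.
  split.
    case: (hx) => [->|[hu hw]]; first by rewrite (c0 HA).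
    exact: (cc_nrm_eq HA x hu hw).
  split.
    move=> x0; case: (hx) => [/x0 //|[hu hw]].
    split.
      by have [b [_ [e1 e2]]] := ccinv x hx x0; exists b.
    move=> v hv e1 e2 y hxy hyx.
    have [i1 i2] := cc_inv HA _ hu hw hv e1 e2.
    by rewrite -(invL HA _ _ hyx hxy (mul v (c x))) i1 (mulx1 HA).
  split => // y hy.
  have [qu qy] := ccP HA hy.
  rewrite !(nrm_mul HA) // (cen_comm pu).
  by split.
split; first by move=> x y; apply: cc_mul.
split; first by move=> x y; apply: nc_mul.
split.
  apply: (loopP HA) => //.
  - apply: (cu_cc HA); split; first exact: (cen_one HA).
    by exists one; rewrite (mul1x HA); split => //; exact: (cen_one HA).
  - by move=> a b; apply: (cc_mul HA).
apply: (loopP HA) => //.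
- by have := @nc_s R V mul one c HA 1 (oner_neq0 R); rewrite scale1r.
- by move=> a b; apply: (nc_mul HA).
move=> a ha a0; have ha' := nc_cc HA ha.
case: (ha) => [/a0 //|[[k [k0 ek]] hw]].
have hv : center mul (k^-1 *: one) by exact: (cen_s HA).
have e1 : mul (nrm mul c a) (k^-1 *: one) = one.
  by rewrite ek (mulsl HA) scalerA mulfV // scale1r.
have e2 : mul (k^-1 *: one) (nrm mul c a) = one.
  by rewrite ek (mulsl HA) scalerA mulVf // scale1r.
have [i1 i2] := cc_inv HA _ (rz_cu HA (ex_intro _ k (conj k0 ek))) (rz_cu HA hw) hv e1 e2.
exists (mul (k^-1 *: one) (c a)); split => //; split.
  apply: (nc_mul HA); first by apply: (nc_s HA); rewrite invr_eq0.
  exact: (nc_c HA).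
move=> b0; rewrite b0 (mul0r HA) in i1; exact: one0 (esym i1).
Qed.
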